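(* Let $R\subseteq\mathbb N$ be sparse, $d\in\mathbb N^+$, $\tilde R\subseteq^d R$, $n\in\mathbb N^+$, and $\mathbf A$ an $n$-tuple of operators on $R$, all $\neq_R0$. Then there is $\Delta_0$ such that for every $\Delta\in d\mathbb N$ with $\Delta\ge\Delta_0$: (i) for all $x\in\mathbb Z$, $x>\mathbf A\cdot P_\Delta(x;\mathbf A,\tilde R)$ iff $x>\inf\mathbf A\cdot\tilde R^n_\Delta$, and $x\le\mathbf A\cdot Q_\Delta(x;\mathbf A,\tilde R)$ iff $x\le\sup\mathbf A\cdot\tilde R^n_\Delta$; (ii) for all $x\in\mathbb Z$, $Q^1_\Delta(x;\mathbf A,\tilde R)=\sigma^{d\varepsilon}P^1_\Delta(x;\mathbf A,\tilde R)$ for some $\varepsilon\in\{-1,0,1\}$.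
   Context: Let $R\subseteq\mathbb N$ be infinite, enumerated increasingly as $(r_n)_{n\in\mathbb N}$; $\sigma:R\to R$ is the successor map $\sigma(r_n)=r_{n+1}$, $\sigma^k$ its $k$-fold iterate ($\sigma^0=\mathrm{id}$), $\sigma^{-1}$ the predecessor map with $\sigma^{-1}(\min R)=\min R$ and $\sigma^{-k}$ its iterate. An operator on $R$ is a function $R\to\mathbb Z$, $z\mapsto a_m\sigma^m(z)+\dots+a_0\sigma^0(z)$ with $a_i\in\mathbb Z$. For an operator $A$: $A=_R0$ if $Az=0$ for all $z\in R$; $A>_R0$ (resp. $A<_R0$) if $Az>0$ (resp. $Az<0$) for all but finitely many $z\in R$. $R$ is sparse if every operator $A$ satisfies (S1) $A=_R0$ or $A>_R0$ or $A<_R0$; and (S2) if $A>_R0$ then there is $\Delta\in\mathbb N$ with $A(\sigma^\Delta z)>z$ for all $z\in R$. $\tilde R\subseteq^dR$ means $\tilde R=\{r_{N+dt}:t\in\mathbb N\}$ for some $N\in\mathbb N$. For $\mathbf A$ an $n$-tuple of operators and $z\in R^n$, $\mathbf A\cdot z=\sum_iA_iz_i$; for $S\subseteq R^n$, $\mathbf A\cdot S=\{\mathbf A\cdot z:z\in S\}$. $\tilde R^n_\Delta=\{(z_1,\dots,z_n)\in\tilde R^n: z_i\ge\sigma^\Delta z_{i+1}\ (1\le i\le n)\}$ with $z_{n+1}:=\min\tilde R$. When $\Delta$ is large enough that $z\mapsto\mathbf A\cdot z$ is injective on $R^n_\Delta$: for nonempty $S\subseteq R^n_\Delta$ with $\mathbf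 A\cdot S$ bounded below (resp. above), $\min_{\mathbf A}S$ (resp. $\max_{\mathbf A}S$) is the unique $z\in S$ with $\mathbf A\cdot z=\min\mathbf A\cdot S$ (resp. $\max$). Then $P_\Delta(x;\mathbf A,\tilde R)=\max_{\mathbf A}\{z\in\tilde R^n_\Delta:\mathbf A\cdot z<x\}$ if $x>\inf\mathbf A\cdot\tilde R^n_\Delta$, and $=\min_{\mathbf A}\tilde R^n_\Delta$ otherwise; $Q_\Delta(x;\mathbf A,\tilde R)=\min_{\mathbf A}\{z\in\tilde R^n_\Delta:\mathbf A\cdot z\ge x\}$ if $x\le\sup\mathbf A\cdot\tilde R^n_\Delta$, and $=\max_{\mathbf A}\tilde R^n_\Delta$ otherwise. $P^i_\Delta,Q^i_\Delta$ denote the $i$-th coordinates. *)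

(* Defs.v *)
From mathcomp Require Import all_boot all_order all_algebra.
From Stdlib Require Import ClassicalEpsilon.
Import Order.TTheory GRing.Theory Num.Theory.
Local Open Scope ring_scope.

(* The infinite set R ⊆ N is given by its increasing enumeration r : nat -> nat
   (r k = r_k).  An element z = r_k of R is handled through its index k; the
   successor map is sigma (r_k) = r_(k+1), hence sigma^i (r_k) = r_(k+i). *)

(* sigma^e on indices for e : int; negative powers use the predecessor map,
   with sigma^-1 (min R) = min R (truncated subtraction). *)
Definition sigpow (e : int) (j : nat) : nat :=
  match e with Posz m => (j + m)%N | Negz m => (j - m.+1)%N end.

(* An operator a_m sigma^m + ... + a_0 sigma^0 is its coefficient list
   [:: a_0; ...; a_m]; applied to z = r_k it gives sum_i a_i r_(k+i). *)
Definition opApp (r : nat -> nat) (A : seq int) (k : nat) : int :=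
  \sum_(i < size A) A`_i * (r (k + i)%N)%:Z.

Definition op_zero (r : nat -> nat) (A : seq int) : Prop :=
  forall k, opApp r A k = 0.
Definition op_pos (r : nat -> nat) (A : seq int) : Prop :=
  exists N, forall k, (N <= k)%N -> 0 < opApp r A k.
Definition op_neg (r : nat -> nat) (A : seq int) : Prop :=
  exists N, forall k, (N <= k)%N -> opApp r A k < 0.

Definition sparse (r : nat -> nat) : Prop :=
  forall A : seq int,
    (op_zero r A \/ op_pos r A \/ op_neg r A) /\
    (op_pos r A -> exists D : nat, forall k, (r k)%:Z < opApp r A (k + D)%N).

(* An n-tuple z in R^n is represented by its index tuple k (z_i = r (k i)). *)
Definition dotA (r : nat -> nat) (n : nat) (As : 'I_n -> seq int)
  (k : {ffun 'I_n -> nat}) : int :=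
  \sum_(i < n) opApp r (As i) (k i).

(* index of z_(j+1) (0-based j), with z_(n+1) := min Rtilde = r_N *)
Definition ext (n N : nat) (k : {ffun 'I_n -> nat}) (j : nat) : nat :=
  oapp k N (insub j : option 'I_n).

(* Rtilde = { r_(N + d t) : t in N } (Rtilde ⊆^d R).
   inTup r N d n D k  <->  (r (k i))_i ∈ Rtilde^n_D, i.e. every z_i ∈ Rtilde and
   z_i >= sigma^D z_(i+1) for 1 <= i <= n with z_(n+1) = min Rtilde = r_N. *)
Definition inTup (r : nat -> nat) (N d n D : nat) (k : {ffun 'I_n -> nat}) : Prop :=
  (forall i : 'I_n, exists t : nat, k i = (N + d * t)%N) /\
  (forall i : 'I_n, (r (ext n N k i.+1 + D) <= r (k i))%N).

Definition gt_inf r N d n D (As : 'I_n -> seq int) (x : int) : Prop :=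
  exists k, inTup r N d n D k /\ dotA r n As k < x.
Definition le_sup r N d n D (As : 'I_n -> seq int) (x : int) : Prop :=
  forall y : int, y < x -> exists k, inTup r N d n D k /\ y < dotA r n As k.

Definition P_spec r N d n D (As : 'I_n -> seq int) (x : int) (k : {ffun 'I_n -> nat}) : Prop :=
  (gt_inf r N d n D As x ->
     inTup r N d n D k /\ dotA r n As k < x /\
     forall k', inTup r N d n D k' -> dotA r n As k' < x -> dotA r n As k' <= dotA r n As k) /\
  (~ gt_inf r N d n D As x ->
     inTup r N d n D k /\
     forall k', inTup r N d n D k' -> dotA r n As k <= dotA r n As k').

Definition Q_spec r N d n D (As : 'I_n -> seq int) (x : int) (k : {ffun 'I_n -> nat}) : Prop :=
  (le_sup r N d n D As x ->
     inTup r N d n D k /\ x <= dotA r n As k /\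
     forall k', inTup r N d n D k' -> x <= dotA r n As k' -> dotA r n As k <= dotA r n As k') /\
  (~ le_sup r N d n D As x ->
     inTup r N d n D k /\
     forall k', inTup r N d n D k' -> dotA r n As k' <= dotA r n As k).

(* The element selected (unique when z |-> A.z is injective on R^n_D). *)
Definition Pfun r N d n D (As : 'I_n -> seq int) (x : int) : {ffun 'I_n -> nat} :=
  epsilon (inhabits [ffun _ => N]) (P_spec r N d n D As x).
Definition Qfun r N d n D (As : 'I_n -> seq int) (x : int) : {ffun 'I_n -> nat} :=
  epsilon (inhabits [ffun _ => N]) (Q_spec r N d n D As x).

(* z |-> A.z is injective on R^n_D  (R^n_D = Rtilde^n_D with N = 0, d = 1) *)
Definition dot_injective r n D (As : 'I_n -> seq int) : Prop :=
  forall k1 k2, inTup r 0 1 n D k1 -> inTup r 0 1 n D k2 ->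
    dotA r n As k1 = dotA r n As k2 -> k1 = k2.

(* Main.v *)
Require Import Defs.
From mathcomp Require Import all_boot all_order all_algebra.
From mathcomp Require Import zify ring lra.
From Stdlib Require Import ClassicalEpsilon Classical.
Import Order.TTheory GRing.Theory Num.Theory.
Local Open Scope ring_scope.



Lemma r_strict (r : nat -> nat) (r_incr : forall k, (r k < r k.+1)%N) a b :
  (a < b)%N -> (r a < r b)%N.
Proof.
elim: b => // b IH; rewrite ltnS leq_eqVlt => /orP [/eqP -> //|/IH h].
exact: ltn_trans h (r_incr b).
Qed.

Lemma r_mono (r : nat -> nat) (r_incr : forall k, (r k < r k.+1)%N) a b :
  (a <= b)%N -> (r a <= r b)%N.
Proof. rewrite leq_eqVlt => /orP [/eqP -> //|/(r_strict _ r_incr) /ltnW //]. Qed.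

Lemma r_le_iff (r : nat -> nat) (r_incr : forall k, (r k < r k.+1)%N) a b :
  (r a <= r b)%N = (a <= b)%N.
Proof.
apply/idP/idP; last exact: r_mono.
by apply: contraTT; rewrite -!ltnNge => /(r_strict _ r_incr).
Qed.

Lemma r_ge_id (r : nat -> nat) (r_incr : forall k, (r k < r k.+1)%N) k : (k <= r k)%N.
Proof. elim: k => // k IH; exact: leq_ltn_trans IH (r_incr k). Qed.

Lemma opApp_pad r A k m : (size A <= m)%N ->
  opApp r A k = \sum_(i < m) A`_i * (r (k+i)%N)%:Z.
Proof.
move=> H; rewrite /opApp (big_ord_widen _ (fun i => A`_i * (r (k+i)%N)%:Z) H) big_mkcond /=.
apply: eq_bigr => i _; case: ltnP => // h; by rewrite nth_default // mul0r.
Qed.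

Lemma opApp_neg r A k : opApp r (map -%R A) k = - opApp r A k.
Proof.
rewrite /opApp size_map -sumrN; apply: eq_bigr => i _; by rewrite (nth_map 0) // mulNr.
Qed.

Definition Gl (A : seq int) := mkseq (fun i => (0::A)`_i - A`_i) (size A).+1.

Lemma opApp_Gl r A k : opApp r (Gl A) k = opApp r A k.+1 - opApp r A k.
Proof.
rewrite /opApp size_mkseq.
under eq_bigr => i _ do rewrite nth_mkseq // mulrBl.
rewrite sumrB big_ord_recl /= mul0r add0r big_ord_recr /= nth_default // mul0r addr0.
congr (_ - _); apply: eq_bigr => i _; by rewrite /bump /= add1n addnS.
Qed.

Lemma opApp_two r k : opApp r [:: -1; 1] k = (r k.+1)%:Z - (r k)%:Z.
Proof. rewrite /opApp /= !big_ord_recl big_ord0 /= addn0 addn1. ring. Qed.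
Arguments r_strict {r}. Arguments r_mono {r}. Arguments r_le_iff {r}. Arguments r_ge_id {r}.



Lemma op_const r A : (forall k, opApp r A k.+1 = opApp r A k) ->
  forall k, opApp r A k = opApp r A 0.
Proof. move=> h; elim=> // k IH; by rewrite h. Qed.

Lemma const_contra r (r_incr : forall k, (r k < r k.+1)%N) (hs : sparse r) A (c : int) :
  0 < c -> (forall k, opApp r A k = c) -> False.
Proof.
move=> c0 hc; have [_ S2] := hs A.
have [|D HD] := S2; first by exists 0%N => k _; rewrite hc.
have := HD `|c|%N; rewrite hc.
have := r_ge_id r_incr `|c|%N.
lia.
Qed.

Lemma op_sign r (r_incr : forall k, (r k < r k.+1)%N) (hs : sparse r) A :
  ~ op_zero r A -> exists (s : int) (D : nat), (s = 1 \/ s = -1) /\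
  forall j, (r j)%:Z < s * (opApp r A (j + D)%N.+1 - opApp r A (j + D)%N).
Proof.
move=> hA; have [[Hz|[Hp|Hn]] S2] := hs (Gl A).
- exfalso.
  have hc := @op_const r A.
  have {}hc : forall k, opApp r A k = opApp r A 0.
    apply: hc => k; move: (Hz k); rewrite opApp_Gl => /eqP; rewrite subr_eq0 => /eqP //.
  case: (ltrgtP (opApp r A 0) 0) => hc0.
  + apply: (@const_contra r r_incr hs (map -%R A) (- opApp r A 0)).
      by rewrite oppr_gt0.
    by move=> k; rewrite opApp_neg hc.
  + exact: (@const_contra r r_incr hs A _ hc0 hc).
  + by apply: hA => k; rewrite hc hc0.
- have [D HD] := S2 Hp; exists 1, D; split; first by left.
  by move=> j; rewrite mul1r -opApp_Gl.
- have [_ S2'] := hs (map -%R (Gl A)).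
  have [|D HD] := S2'.
    by case: Hn => K HK; exists K => k /HK; rewrite opApp_neg oppr_gt0.
  exists (-1), D; split; first by right.
  by move=> j; rewrite mulN1r -opApp_Gl -opApp_neg.
Qed.

Lemma doubling r (r_incr : forall k, (r k < r k.+1)%N) (hs : sparse r) (C : nat) :
  exists T, forall j, (C * r j <= r (j + T))%N.
Proof.
have [_ S2] := hs [:: -1; 1].
have [|D HD] := S2.
  exists 0%N => k _; rewrite opApp_two subr_gt0 ltz_nat; exact: r_incr.
have h2 : forall k, (2 * r k <= r (k + D.+1))%N.
  move=> k; have := HD k; rewrite opApp_two addnS.
  have := r_mono r_incr _ _ (leq_addr D k). lia.
have hp : forall t j, (2 ^ t * r j <= r (j + t * D.+1))%N.
  elim=> [|t IH] j; first by rewrite expn0 mul1n addn0.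
  rewrite expnS -mulnA [(t.+1 * _)%N]mulSnr addnA.
  apply: leq_trans _ (h2 _); rewrite leq_mul2l /=; exact: IH.
exists (C * D.+1)%N => j; apply: leq_trans (hp C j).
by rewrite leq_mul2r ltnW ?orbT // ltn_expl.
Qed.



Lemma ext_lt n N (k : {ffun 'I_n -> nat}) j (h : (j < n)%N) : ext n N k j = k (Ordinal h).
Proof. by rewrite /ext insubT. Qed.

Lemma ext_ge n N (k : {ffun 'I_n -> nat}) j : (n <= j)%N -> ext n N k j = N.
Proof. by move=> h; rewrite /ext insubF // ltnNge h. Qed.

Lemma ext_ord n N (k : {ffun 'I_n -> nat}) (i : 'I_n) : ext n N k i = k i.
Proof. by rewrite (ext_lt _ N k _ (ltn_ord i)); congr (k _); apply: val_inj. Qed.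

Definition gd n D (k : {ffun 'I_n -> nat}) := forall i : 'I_n, (ext n 0 k i.+1 + D <= k i)%N.

Lemma gd_chain n D k : gd n D k -> forall a b, (a < b)%N -> (b <= n)%N ->
  (ext n 0 k b + D <= ext n 0 k a)%N.
Proof.
move=> g a; elim=> // b IH; rewrite ltnS => hab hb.
have hb' : (b < n)%N by [].
have := g (Ordinal hb'); rewrite /= -(ext_lt _ 0 k) => h.
case: (ltngtP a b) hab => // [hlt _|-> _]; last by [].
have := IH hlt (ltnW hb'); lia.
Qed.

Arguments gd_chain {n D k}.
Lemma gd_lt n D k : gd n D k -> forall i j : 'I_n, (i < j)%N -> (k j + D <= k i)%N.
Proof. by move=> g i j h; have := gd_chain g _ _ h (ltnW (ltn_ord j)); rewrite !ext_ord. Qed.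

Lemma gd_ge n D k : gd n D k -> forall i : 'I_n, (D <= k i)%N.
Proof. by move=> g i; have := g i; lia. Qed.

Arguments gd_lt {n D k}. Arguments gd_ge {n D k}.
Definition normA (A : seq int) : int := \sum_(i < size A) `|A`_i|.

Lemma normA_ge0 A : 0 <= normA A.
Proof. by apply: sumr_ge0. Qed.

Lemma opApp_bound r (r_incr : forall k, (r k < r k.+1)%N) A k m : (size A <= m)%N ->
  `|opApp r A k| <= normA A * (r (k + m)%N)%:Z.
Proof.
move=> hm; rewrite /opApp /normA mulr_suml.
apply: le_trans (ler_norm_sum _ _ _) _; apply: ler_sum => i _.
rewrite normrM [`|(_%:Z)|]ger0_norm // ler_wpM2l // lez_nat.
apply: r_mono => //; have := ltn_ord i; lia.
Qed.

Lemma mono_s r (A : seq int) (s : int) (Dl : nat)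
  (hg : forall j, (r j)%:Z < s * (opApp r A (j + Dl)%N.+1 - opApp r A (j + Dl)%N)) :
  forall a b, (Dl <= a)%N -> (a <= b)%N -> s * opApp r A a <= s * opApp r A b.
Proof.
move=> a b ha; elim: b => [|b IH]; first by rewrite leqn0 => /eqP ->.
rewrite leq_eqVlt => /orP [/eqP -> //| ]; rewrite ltnS => hab.
apply: le_trans (IH hab) _; have hb : (Dl <= b)%N := leq_trans ha hab.
have := hg (b - Dl)%N; rewrite subnK // => h2.
have : 0 <= (r (b - Dl)%N)%:Z by [].
rewrite mulrBr in h2; lra.
Qed.

Lemma dominance r (r_incr : forall k, (r k < r k.+1)%N) n (As : 'I_n -> seq int)
  (s : 'I_n -> int) (Dl : 'I_n -> nat) (T D : nat)
  (hs1 : forall i, s i = 1 \/ s i = -1)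
  (hg : forall i j, (r j)%:Z < s i * (opApp r (As i) (j + Dl i)%N.+1 - opApp r (As i) (j + Dl i)%N))
  (hT : forall j, 2 * (\sum_i normA (As i)) * (r j)%:Z <= (r (j + T)%N)%:Z)
  (hD : forall i, (Dl i + T + (\sum_i size (As i)) + 1 <= D)%N)
  (k k' : {ffun 'I_n -> nat}) : gd n D k -> gd n D k' ->
  forall i : 'I_n, (forall j : 'I_n, (j < i)%N -> k j = k' j) -> (k i < k' i)%N ->
  0 < s i * (dotA r n As k' - dotA r n As k).
Proof.
move=> gk gk' i heq hlt.
set M := \sum_i normA (As i). set m := (\sum_i size (As i))%N.
set R := (r (k' i - D + m)%N)%:Z.
have hsz : forall j, (size (As j) <= m)%N.
  by move=> j; rewrite /m (bigD1 j) //=; exact: leq_addr.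
have hDi := hD i; rewrite -/m in hDi. have hki := gd_ge gk i.
pose f j := opApp r (As j) (k' j) - opApp r (As j) (k j).
have hsum : dotA r n As k' - dotA r n As k = f i + \sum_(j | j != i) f j.
  by rewrite /dotA -sumrB (bigD1 i).
have R0 : 0 <= R by [].
have hrest : `|\sum_(j | j != i) f j| <= 2 * M * R.
  apply: le_trans (ler_norm_sum _ _ _) _.
  apply: (@le_trans _ _ (\sum_(j | j != i) 2 * normA (As j) * R)).
    apply: ler_sum => j hji.
    case: (ltngtP j i) => hj.
    - by rewrite /f heq // subrr normr0 mulr_ge0 // mulr_ge0 ?normA_ge0.
    - apply: le_trans (ler_normB _ _) _.
      have h1 := opApp_bound _ r_incr (As j) (k' j) _ (hsz j).
      have h2 := opApp_bound _ r_incr (As j) (k j) _ (hsz j).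
      have hk'j := gd_lt gk' _ _ hj. have hkj := gd_lt gk _ _ hj.
      have e1 : (r (k' j + m)%N <= r (k' i - D + m)%N)%N by apply: (r_mono r_incr); lia.
      have e2 : (r (k j + m)%N <= r (k' i - D + m)%N)%N by apply: (r_mono r_incr); lia.
      have n0 := normA_ge0 (As j).
      have e1' : normA (As j) * (r (k' j + m)%N)%:Z <= normA (As j) * R
        by rewrite ler_wpM2l // lez_nat.
      have e2' : normA (As j) * (r (k j + m)%N)%:Z <= normA (As j) * R
        by rewrite ler_wpM2l // lez_nat.
      lra.
    - by move: hji; rewrite (val_inj hj) eqxx.
  apply: (@le_trans _ _ (\sum_j 2 * normA (As j) * R)).
    rewrite [X in _ <= X](bigD1 i) //=.
    have : 0 <= 2 * normA (As i) * R by rewrite mulr_ge0 // mulr_ge0 ?normA_ge0.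
    lra.
  by rewrite -mulr_suml -mulr_sumr.
set K := (k' i).-1.
have hK1 : K.+1 = k' i by rewrite /K prednK //; lia.
have hDK : (Dl i <= K)%N by lia.
have hmono := mono_s _ _ _ _ (hg i) (k i) K ltac:(lia) ltac:(lia).
have hgK := hg i (K - Dl i)%N; rewrite subnK // hK1 in hgK.
have hTj := hT (k' i - D + m)%N.
have hrm : (r (k' i - D + m + T)%N <= r (K - Dl i)%N)%N by apply: (r_mono r_incr); lia.
move: hrm; rewrite -lez_nat => hrm.
rewrite -/M -/R in hTj.
set X := 2 * M * R in hrest hTj.
rewrite hsum /f.
set rest := \sum_(j | j != i) _ in hrest *.
have hn1 := lerNnormlW (lexx `|rest|).
have hn2 := ler_normlW (lexx `|rest|).
case: (hs1 i) => hs; rewrite hs in hgK hmono *; lra.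
Qed.



Lemma nat_min (Q : nat -> Prop) : (exists n, Q n) -> exists n, Q n /\ forall m, Q m -> (n <= m)%N.
Proof.
move=> [n0 hn0]; apply: NNPP => hno.
have H : forall t, forall m, (m < t)%N -> ~ Q m.
  elim=> // t IH m; rewrite ltnS leq_eqVlt => /orP [/eqP ->|/IH //].
  move=> hq; apply: hno; exists t; split => // m' hm'.
  rewrite leqNgt; apply/negP => hlt; exact: IH _ hlt hm'.
exact: H n0.+1 n0 (ltnSn _) hn0.
Qed.

Lemma int_min (P : int -> Prop) (lb : int) : (forall y, P y -> lb <= y) -> (exists y, P y) ->
  exists y, P y /\ forall z, P z -> y <= z.
Proof.
move=> hlb [y0 hy0].
have [|n [hn hmin]] := nat_min (fun n : nat => P (lb + n%:Z)).
  exists `|y0 - lb|%N; rewrite abszE ger0_norm; last by have := hlb _ hy0; lia.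
  by have -> : lb + (y0 - lb) = y0 by ring.
exists (lb + n%:Z); split => // z hz.
have hz0 := hlb _ hz.
have := hmin `|z - lb|%N; rewrite abszE ger0_norm; last lia.
have -> : lb + (z - lb) = z by ring.
move=> /(_ hz); rewrite -lez_nat abszE ger0_norm; lia.
Qed.

Lemma int_max (P : int -> Prop) (ub : int) : (forall y, P y -> y <= ub) -> (exists y, P y) ->
  exists y, P y /\ forall z, P z -> z <= y.
Proof.
move=> hub [y0 hy0].
have h1 : forall y, P (- y) -> - ub <= y by move=> y /hub; lia.
have h2 : exists y, P (- y) by exists (- y0); rewrite opprK.
have [y [hy hmin]] := @int_min (fun y => P (- y)) (- ub) h1 h2.
exists (- y); split => // z hz; have := hmin (- z); rewrite opprK => /(_ hz); lia.
Qed.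

Lemma inTup_gd r (r_incr : forall k, (r k < r k.+1)%N) N d n D k :
  inTup r N d n D k -> gd n D k.
Proof.
move=> [_ h] i; have := h i; rewrite r_le_iff //.
case: (ltnP i.+1 n) => hi.
  by rewrite (ext_lt _ N k _ hi) (ext_lt _ 0 k _ hi).
by rewrite (ext_ge _ N k _ hi) (ext_ge _ 0 k _ hi); lia.
Qed.

Lemma gd_inTup r (r_incr : forall k, (r k < r k.+1)%N) n D k :
  gd n D k -> inTup r 0%N 1%N n D k.
Proof.
move=> g; split; first by move=> i; exists (k i); rewrite add0n mul1n.
by move=> i; rewrite r_le_iff //; apply: g.
Qed.

Lemma inTup_nonempty r (r_incr : forall k, (r k < r k.+1)%N) N d n D : (0 < d)%N ->
  exists k, inTup r N d n D k.
Proof.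
move=> hd; exists [ffun i : 'I_n => (N + d * (D * (n - i)))%N]; split.
  by move=> i; rewrite ffunE; eexists.
move=> i; rewrite ffunE r_le_iff //.
case: (ltnP i.+1 n) => hi.
  rewrite (ext_lt _ N _ _ hi) ffunE /=.
  have e : (n - i = (n - i.+1).+1)%N by lia.
  rewrite e mulnS mulnDr; have : (D <= d * D)%N by rewrite leq_pmull. lia.
rewrite (ext_ge _ N _ _ hi).
have e : (n - i = 1)%N by have := ltn_ord i; lia.
rewrite e muln1; have : (D <= d * D)%N by rewrite leq_pmull. lia.
Qed.

Definition bumpk n (i0 : 'I_n) (d : nat) (k : {ffun 'I_n -> nat}) : {ffun 'I_n -> nat} :=
  [ffun j => if j == i0 then (k j + d)%N else k j].

Lemma bumpk_inTup r (r_incr : forall k, (r k < r k.+1)%N) N d n D k (hn : (0 < n)%N) :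
  inTup r N d n D k -> inTup r N d n D (@bumpk n (Ordinal hn) d k).
Proof.
move=> [h1 h2]; split.
  move=> i; rewrite ffunE; case: eqP => _ //.
  by have [t ->] := h1 i; exists t.+1; rewrite mulnS; lia.
move=> i; have e : ext n N (@bumpk n (Ordinal hn) d k) i.+1 = ext n N k i.+1.
  case: (ltnP i.+1 n) => hi.
    by rewrite !(ext_lt _ N _ _ hi) ffunE; case: eqP => // /(congr1 val).
  by rewrite !(ext_ge _ N _ _ hi).
rewrite e; apply: leq_trans (h2 i) _; rewrite r_le_iff // ffunE.
by case: eqP => _ //; apply: leq_addr.
Qed.

Lemma bumpk_at n (hn : (0 < n)%N) d k : @bumpk n (Ordinal hn) d k (Ordinal hn) = (k (Ordinal hn) + d)%N.
Proof. by rewrite ffunE eqxx. Qed.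

Lemma sigpow0 j : sigpow (0 : int) j = j.
Proof. by rewrite /sigpow /= addn0. Qed.
Lemma sigpow1 (d : nat) j : sigpow (d%:Z * 1) j = (j + d)%N.
Proof. by rewrite mulr1. Qed.
Lemma sigpowN1 (d : nat) j : (0 < d)%N -> sigpow (d%:Z * -1) j = (j - d)%N.
Proof. by rewrite mulrN1; case: d. Qed.



Arguments op_sign {r} r_incr hs {A}.
Arguments doubling {r} r_incr hs C.
Arguments inTup_gd {r} r_incr {N d n D k}.
Arguments gd_inTup {r} r_incr {n D k}.
Arguments inTup_nonempty {r} r_incr N {d} n D.
Arguments bumpk_inTup {r} r_incr {N d n D k} hn.
Arguments int_max {P ub}. Arguments int_min {P lb}.

Theorem mainTheorem7 (r : nat -> nat) (r_incr : forall k, (r k < r k.+1)%N)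
  (hsparse : sparse r) (d : nat) (hd : (0 < d)%N) (N : nat)
  (n : nat) (hn : (0 < n)%N) (As : 'I_n -> seq int)
  (hAs : forall i, ~ op_zero r (As i)) :
  exists D0 : nat, forall D : nat, (D0 <= D)%N -> (d %| D)%N ->
    dot_injective r n D As /\
    (forall x : int,
       (dotA r n As (Pfun r N d n D As x) < x <-> gt_inf r N d n D As x) /\
       (x <= dotA r n As (Qfun r N d n D As x) <-> le_sup r N d n D As x)) /\
    (forall x : int, exists e : int, (e = -1 \/ e = 0 \/ e = 1) /\
       r (Qfun r N d n D As x (Ordinal hn)) =
       r (sigpow (d%:Z * e) (Pfun r N d n D As x (Ordinal hn)))).
Proof.
have hsD : forall i, exists p : int * nat, (p.1 = 1 \/ p.1 = -1) /\
    forall j, (r j)%:Z < p.1 * (opApp r (As i) (j + p.2)%N.+1 - opApp r (As i) (j + p.2)%N).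
  by move=> i; have [s [D0 H]] := op_sign r_incr hsparse (hAs i); exists (s, D0).
pose sD i := proj1_sig (constructive_indefinite_description _ (hsD i)).
have hsDP : forall i, ((sD i).1 = 1 \/ (sD i).1 = -1) /\
    forall j, (r j)%:Z < (sD i).1 * (opApp r (As i) (j + (sD i).2)%N.+1 - opApp r (As i) (j + (sD i).2)%N).
  by move=> i; exact: (proj2_sig (constructive_indefinite_description _ (hsD i))).
pose s i := (sD i).1. pose Dl i := (sD i).2.
have hs1 : forall i, s i = 1 \/ s i = -1 by move=> i; case: (hsDP i).
have hg : forall i j, (r j)%:Z < s i * (opApp r (As i) (j + Dl i)%N.+1 - opApp r (As i) (j + Dl i)%N).
  by move=> i; case: (hsDP i).
pose M := \sum_i normA (As i). pose m := (\sum_i size (As i))%N.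
have M0 : 0 <= 2 * M by rewrite mulr_ge0 // sumr_ge0 // => i _; apply: normA_ge0.
have [T hT0] := doubling r_incr hsparse `|(2 * M)%R|%N.
have hT : forall j, 2 * M * (r j)%:Z <= (r (j + T)%N)%:Z.
  by move=> j; have := hT0 j; rewrite -lez_nat PoszM abszE ger0_norm.
exists (\sum_i Dl i + T + m + 1)%N => D hD hdD.
have hDi : forall i, (Dl i + T + m + 1 <= D)%N.
  move=> i; have : (Dl i <= \sum_i Dl i)%N by rewrite (bigD1 i) //= leq_addr.
  lia.
have dom := @dominance r r_incr n As s Dl T D hs1 hg hT hDi.
have inj : dot_injective r n D As.
  move=> k1 k2 h1 h2 heq.
  have g1 := inTup_gd r_incr h1. have g2 := inTup_gd r_incr h2.
  apply/ffunP => i.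
  suff H : forall t (i : 'I_n), (i < t)%N -> k1 i = k2 i by exact: H i.+1 i (ltnSn _).
  elim=> // t IH i'; rewrite ltnS leq_eqVlt => /orP [/eqP hit|/IH //].
  have heqj : forall j : 'I_n, (j < i')%N -> k1 j = k2 j by move=> j hj; apply: IH; rewrite -hit.
  case: (ltngtP (k1 i') (k2 i')) => // hlt.
  - by have := dom k1 k2 g1 g2 i' heqj hlt; rewrite heq subrr mulr0 ltxx.
  - have := dom k2 k1 g2 g1 i' (fun j hj => esym (heqj j hj)) hlt.
    by rewrite heq subrr mulr0 ltxx.
pose V := dotA r n As.
have [k0 hk0] := inTup_nonempty r_incr N n D hd.
have specP : forall x, P_spec r N d n D As x (Pfun r N d n D As x).
  move=> x; apply: epsilon_spec.
  case: (classic (gt_inf r N d n D As x)) => hgi.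
  - have h1 : forall y, (exists k, inTup r N d n D k /\ V k = y /\ y < x) -> y <= x.
      by move=> y [k [_ [_ h]]]; apply: ltW.
    have h2 : exists y, (exists k, inTup r N d n D k /\ V k = y /\ y < x).
      by case: hgi => k [hk hkx]; exists (V k), k.
    have [y [[k [hk [hky hyx]]] hmax]] := int_max h1 h2.
    exists k; split => // _; split => //; split; first by rewrite /V in hky; rewrite hky.
    move=> k' hk' hk'x; rewrite -/V hky; apply: hmax; by exists k'.
  - have ngt : forall k, inTup r N d n D k -> x <= V k.
      move=> k hk; rewrite leNgt; apply/negP => h; apply: hgi; by exists k.
    have h1 : forall y, (exists k, inTup r N d n D k /\ V k = y) -> x <= y.
      by move=> y [k [hk <-]]; apply: ngt.
    have h2 : exists y, (exists k, inTup r N d n D k /\ V k = y) by exists (V k0), k0.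
    have [y [[k [hk hky]] hmin]] := int_min h1 h2.
    exists k; split => // _; split => // k' hk'; rewrite -/V hky; apply: hmin; by exists k'.
have notsup : forall x, ~ le_sup r N d n D As x ->
    exists y, y < x /\ forall k, inTup r N d n D k -> V k <= y.
  move=> x hls; apply: NNPP => hno; apply: hls => y hyx; apply: NNPP => hne.
  apply: hno; exists y; split => // k hk; rewrite leNgt; apply/negP => h; apply: hne.
  by exists k.
have specQ : forall x, Q_spec r N d n D As x (Qfun r N d n D As x).
  move=> x; apply: epsilon_spec.
  case: (classic (le_sup r N d n D As x)) => hls.
  - have h1 : forall y, (exists k, inTup r N d n D k /\ V k = y /\ x <= y) -> x <= y.
      by move=> y [k [_ [_ h]]].
    have h2 : exists y, (exists k, inTup r N d n D k /\ V k = y /\ x <= y).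
      have hx1 : x - 1 < x by lia.
      have [k [hk hkx]] := hls (x - 1) hx1.
      exists (V k), k; split => //; split => //; rewrite /V; lia.
    have [y [[k [hk [hky hyx]]] hmin]] := int_min h1 h2.
    exists k; split => // _; split => //; split; first by rewrite /V in hky; rewrite hky.
    move=> k' hk' hk'x; rewrite -/V hky; apply: hmin; by exists k'.
  - have [y0 [hy0x hy0]] := notsup x hls.
    have h1 : forall y, (exists k, inTup r N d n D k /\ V k = y) -> y <= y0.
      by move=> y [k [hk <-]]; apply: hy0.
    have h2 : exists y, (exists k, inTup r N d n D k /\ V k = y) by exists (V k0), k0.
    have [y [[k [hk hky]] hmax]] := int_max h1 h2.
    exists k; split => // _; split => // k' hk'; rewrite -/V hky; apply: hmax; by exists k'.
have Pin : forall x, inTup r N d n D (Pfun r N d n D As x).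
  move=> x; case: (classic (gt_inf r N d n D As x)) => h.
    exact: ((specP x).1 h).1.
  exact: ((specP x).2 h).1.
have Qin : forall x, inTup r N d n D (Qfun r N d n D As x).
  move=> x; case: (classic (le_sup r N d n D As x)) => h.
    exact: ((specQ x).1 h).1.
  exact: ((specQ x).2 h).1.
split => //; split.
  move=> x; split; split.
  - by move=> h; exists (Pfun r N d n D As x); split.
  - by move=> hgi; exact: ((specP x).1 hgi).2.1.
  - move=> h; apply: NNPP => hls; have [y [hyx hy]] := notsup x hls.
    have := hy _ (Qin x); rewrite /V; lia.
  - by move=> hls; exact: ((specQ x).1 hls).2.1.
move=> x.
set kP := Pfun r N d n D As x. set kQ := Qfun r N d n D As x.
set i0 := Ordinal hn.
have toR : forall k, inTup r N d n D k -> inTup r 0%N 1%N n D k.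
  move=> k hk; have g := inTup_gd r_incr hk. exact: (@gd_inTup r r_incr n D k g).
have eq0 : V kP = V kQ -> exists e : int, (e = -1 \/ e = 0 \/ e = 1) /\
    r (kQ i0) = r (sigpow (d%:Z * e) (kP i0)).
  move=> he; have e : kP = kQ.
    by apply: inj; [exact: toR (Pin x) | exact: toR (Qin x) | exact: he].
  by exists 0; split; [right; left | rewrite e mulr0 sigpow0].
have hP := Pin x. have hQ := Qin x. rewrite -/kP in hP. rewrite -/kQ in hQ.
case: (classic (gt_inf r N d n D As x)) => hgi;
  case: (classic (le_sup r N d n D As x)) => hls.
- have [_ [hPx hPmax]] := (specP x).1 hgi. have [_ [hQx hQmin]] := (specQ x).1 hls.
  rewrite -/kP -/V in hPx hPmax. rewrite -/kQ -/V in hQx hQmin.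
  have domR : forall k k', inTup r N d n D k -> inTup r N d n D k' -> (k i0 < k' i0)%N ->
      0 < s i0 * (V k' - V k).
    move=> k k' hk hk' hlt.
    have g1 := inTup_gd r_incr hk. have g2 := inTup_gd r_incr hk'.
    apply: (dom k k' g1 g2 i0) => // j; by rewrite /= ltn0.
  have [tp htp] := hP.1 i0. have [tq htq] := hQ.1 i0.
  case: (hs1 i0) => hs.
  + have nlt : ~ (kQ i0 < kP i0)%N.
      move=> h; have := domR _ _ hQ hP h; rewrite hs => h'; clear -h' hPx hQx; lra.
    have ngt : ~ (kP i0 + d < kQ i0)%N.
      move=> h; pose w := @bumpk n i0 d kP.
      have hw : inTup r N d n D w := bumpk_inTup r_incr hn hP.
      have d1 := domR _ _ hP hw ltac:(rewrite /w ffunE eqxx; clear -hd; lia).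
      have d2 := domR _ _ hw hQ ltac:(rewrite /w ffunE eqxx; clear -h; lia).
      rewrite hs in d1 d2.
      case: (ltP (V w) x) => hwx.
      * have := hPmax w hw hwx => h'; clear -h' d1 d2; lra.
      * have := hQmin w hw hwx => h'; clear -h' d1 d2; lra.
    have : (kQ i0 = kP i0 \/ kQ i0 = kP i0 + d)%N.
      rewrite htp htq in nlt ngt *; clear -nlt ngt hd.
      have h1 : (tp <= tq)%N by rewrite -(leq_pmul2l hd); lia.
      have h2 : (tq <= tp.+1)%N by rewrite -(leq_pmul2l hd); lia.
      case: (ltngtP tq tp) h1 h2 => [|h _ h2'|-> _ _]; [lia| |by left].
      right; have -> : tq = tp.+1 by clear -h h2'; lia. by rewrite mulnS; lia.
    case=> ->.
      by exists 0; split; [right; left | rewrite mulr0 sigpow0].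
    by exists 1; split; [right; right | rewrite sigpow1].
  + have nlt : ~ (kP i0 < kQ i0)%N.
      move=> h; have := domR _ _ hP hQ h; rewrite hs => h'; clear -h' hPx hQx; lra.
    have ngt : ~ (kQ i0 + d < kP i0)%N.
      move=> h; pose w := @bumpk n i0 d kQ.
      have hw : inTup r N d n D w := bumpk_inTup r_incr hn hQ.
      have d1 := domR _ _ hQ hw ltac:(rewrite /w ffunE eqxx; clear -hd; lia).
      have d2 := domR _ _ hw hP ltac:(rewrite /w ffunE eqxx; clear -h; lia).
      rewrite hs in d1 d2.
      case: (ltP (V w) x) => hwx.
      * have := hPmax w hw hwx => h'; clear -h' d1 d2; lra.
      * have := hQmin w hw hwx => h'; clear -h' d1 d2; lra.
    have : (kP i0 = kQ i0 \/ kP i0 = kQ i0 + d)%N.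
      rewrite htp htq in nlt ngt *; clear -nlt ngt hd.
      have h1 : (tq <= tp)%N by rewrite -(leq_pmul2l hd); lia.
      have h2 : (tp <= tq.+1)%N by rewrite -(leq_pmul2l hd); lia.
      case: (ltngtP tp tq) h1 h2 => [|h _ h2'|-> _ _]; [lia| |by left].
      right; have -> : tp = tq.+1 by clear -h h2'; lia. by rewrite mulnS; lia.
    case=> ->.
      by exists 0; split; [right; left | rewrite mulr0 sigpow0].
    by exists (-1); split; [left | rewrite sigpowN1 // addnK].
- have [_ [hPx hPmax]] := (specP x).1 hgi.
  have [_ hQmax] := (specQ x).2 hls.
  have [y [hyx hy]] := notsup x hls.
  apply: eq0; apply/eqP; rewrite eq_le; apply/andP; split.
    exact: hQmax.
  apply: hPmax => //; have := hy _ hQ; rewrite /V => h'; clear -h' hyx; lia.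
- have [_ hPmin] := (specP x).2 hgi.
  have [_ [hQx hQmin]] := (specQ x).1 hls.
  have ngt : forall k, inTup r N d n D k -> x <= V k.
    move=> k hk; rewrite leNgt; apply/negP => h; apply: hgi; by exists k.
  apply: eq0; apply/eqP; rewrite eq_le; apply/andP; split.
    exact: hPmin.
  by apply: hQmin => //; apply: ngt.
- exfalso; have [_ hPmin] := (specP x).2 hgi.
  have [y [hyx hy]] := notsup x hls.
  apply: hgi; exists kP; split => //; have := hy _ hP; rewrite /V => h'; clear -h' hyx; lia.
Qed.
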